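(* Let $n\ge d$, let $\mathbf X\in\mathbb R^{n\times d}$ have full column rank, let $1\le k<d$, let $\mathbf y\in\mathbb R^n$ with $\hat\sigma_{1:k}:=\|(\mathbf I-\mathbf P_{-1:k})\mathbf y\|>0$, and fix $\lambda>0$. With $\hat{\boldsymbol\beta}^\lambda_{-1:k}(\cdot)$, $\mathcal A(\cdot)$, $\mathbf P_{\mathcal A(\cdot)}$ and $g_r$ as in the context, let $\mathbf b^*\in\mathbb R^k\setminus\{\mathbf 0\}$ be such that $\mathcal A(\cdot)$ is constant on a neighborhood of $\mathbf b^*$. Then there is a neighborhood $N$ of $\mathbf b^*$ such that for all $\mathbf b\in N$ with $\|\mathbf b\|=\|\mathbf b^*\|$, $$g_{\|\mathbf b^*\|}(\mathbf b)=\nabla g_{\|\mathbf b^*\|}(\mathbf b^* )\,\mathbf b+\boldsymbol\nu(\mathbf b^* ),$$ where $$\boldsymbol\nu(\mathbf b^* )=-\frac{1}{\hat\sigma_{1:k}}\mathbf V_{1:k}^T\mathbf X_{1:k}\check{\boldsymbol\beta}^\lambda_{1:k}(\mathbf b^* ),\qquad \check{\boldsymbol\beta}^\lambda_{1:k}(\mathbf b^* )=\mathbf S^{-1}\mathbf X_{1:k}^T\mathbf P_{-1:k}\big(\mathbf y-\mathbf X_{-1:k}\hat{\boldsymbol\beta}^\lambda_{-1:k}(\mathbf b^* )-\mathbf P_{\mathcal A(\mathbf b^* )}\mathbf X_{1:k}\mathbf b^*\big),$$ $\mathbf S=\mathbf X_{1:k}^T\mathbf V_{1:k}\mathbf V_{1:k}^T\mathbf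 X_{1:k}$, and $\nabla g_{r}(\mathbf b^* )=\frac{1}{\hat\sigma_{1:k}}(\mathbf X_{1:k}^T\mathbf V_{1:k})^{-1}\big[\mathbf X_{1:k}^T(\mathbf I-\mathbf P_{\mathcal A(\mathbf b^* )})\mathbf X_{1:k}+\frac{n\lambda}{r}\mathbf I\big]$.
   Context: For a matrix $\mathbf A$, $\mathbf A_i$ is its $i$-th column, $\mathbf A_{1:i}$ its first $i$ columns and $\mathbf A_{-1:i}$ the submatrix with the first $i$ columns removed. $\mathbf P_{-1:i}$ is the orthogonal projection onto the column space of $\mathbf X_{-1:i}$. $\mathbf V\in\mathbb R^{n\times(n-d+k)}$ has orthonormal columns spanning the orthogonal complement of the column space of $\mathbf X_{-1:k}$, with first $k$ columns $\mathbf V_i=(\mathbf I-\mathbf P_{-1:i})\mathbf X_i/\|(\mathbf I-\mathbf P_{-1:i})\mathbf X_i\|$. $\hat{\mathbf y}_{1:k}=\mathbf P_{-1:k}\mathbf y$. For $\mathbf b\in\mathbb R^k$: $\hat{\boldsymbol\beta}^\lambda_{-1:k}(\mathbf b)=\arg\min_{\boldsymbol\gamma\in\mathbb R^{d-k}}\big(\frac1{2n}\|\mathbf y-\mathbf X_{1:k}\mathbf b-\mathbf X_{-1:k}\boldsymbol\gamma\|_2^2+\lambda\|\boldsymbol\gamma\|_1\big)$ (unique); $\mathcal A(\mathbf b)\subseteq\{k+1,\dots,d\}$ is the set of indices of columns of $\mathbf X$ whose coefficient in $\hat{\boldsymbol\beta}^\lambda_{-1:k}(\mathbf b)$ is nonzero;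 $\mathbf P_{\mathcal A(\mathbf b)}$ is the orthogonal projection onto the span of $\{\mathbf X_i:i\in\mathcal A(\mathbf b)\}$. For $r>0$, $g_r(\mathbf b)=\frac{1}{\hat\sigma_{1:k}}(\mathbf X_{1:k}^T\mathbf V_{1:k})^{-1}\big(-\mathbf X_{1:k}^T(\hat{\mathbf y}_{1:k}-\mathbf X_{1:k}\mathbf b-\mathbf X_{-1:k}\hat{\boldsymbol\beta}^\lambda_{-1:k}(\mathbf b))+n\lambda\,\mathbf b/r\big)$ (the paper's $f^{-1}_{\mathbf S^{(1:k)}}(\mathbf b;r)$). *)

(* Defs.v *)
From HB Require Import structures.
From mathcomp Require Import all_boot all_order all_algebra.
From mathcomp Require Import reals.
Set Implicit Arguments. Unset Strict Implicit. Unset Printing Implicit Defensive.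
Import Order.TTheory GRing.Theory Num.Theory.
Local Open Scope ring_scope.

Section Defs.
Variable R : realType.

Definition enorm (p : nat) (v : 'cV[R]_p) : R := Num.sqrt (\sum_i (v i 0) ^+ 2).

Definition l1norm (p : nat) (v : 'cV[R]_p) : R := \sum_i `|v i 0|.

(* Orthogonal projection onto the column space of M, for M of full column
   rank: M (M^T M)^{-1} M^T. *)
Definition proj_mx (n p : nat) (M : 'M[R]_(n, p)) : 'M[R]_n :=
  M *m invmx (M^T *m M) *m M^T.

(* The submatrix of X made of the columns indexed by A (in increasing order). *)
Definition cols (n p : nat) (X : 'M[R]_(n, p)) (A : {set 'I_p}) :
  'M[R]_(n, #|A|) := colsub (@enum_val _ (mem A)) X.

Definition colspan_proj (n p : nat) (X : 'M[R]_(n, p)) (A : {set 'I_p}) : 'M[R]_n :=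
  proj_mx (cols X A).

(* The design matrix X has d = k + m columns; X_{1:k} = lsubmx X,
   X_{-1:k} = rsubmx X. *)

Definition lasso_obj (n k m : nat) (X : 'M[R]_(n, k + m)) (y : 'cV[R]_n)
  (lam : R) (b : 'cV[R]_k) (g : 'cV[R]_m) : R :=
  (2 * n%:R)^-1 * (enorm (y - lsubmx X *m b - rsubmx X *m g)) ^+ 2
  + lam * l1norm g.

(* beta is the (unique) lasso map b |-> hat beta^lambda_{-1:k}(b). *)
Definition is_lasso_map (n k m : nat) (X : 'M[R]_(n, k + m)) (y : 'cV[R]_n)
  (lam : R) (beta : 'cV[R]_k -> 'cV[R]_m) : Prop :=
  forall b g, lasso_obj X y lam b (beta b) <= lasso_obj X y lam b g.

(* Active set A(b), indices relative to the block X_{-1:k}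
   (index j : 'I_m corresponds to column k+1+j of X, 1-based). *)
Definition active (k m : nat) (beta : 'cV[R]_k -> 'cV[R]_m) (b : 'cV[R]_k)
  : {set 'I_m} := [set j | beta b j 0 != 0].

Definition P_rest (n k m : nat) (X : 'M[R]_(n, k + m)) : 'M[R]_n :=
  proj_mx (rsubmx X).

(* P_{-1:i} for the 0-based column index i of X_{1:k}: projection onto the
   span of the columns of X with (0-based) index > i, i.e. X with its first
   i+1 (1-based: first i) columns removed. *)
Definition P_after (n k m : nat) (X : 'M[R]_(n, k + m)) (i : 'I_k) : 'M[R]_n :=
  colspan_proj X [set j : 'I_(k + m) | (i < j)%N].

Definition V1 (n k m : nat) (X : 'M[R]_(n, k + m)) : 'M[R]_(n, k) :=
  \matrix_(r < n, c < k)
    (let w := (1%:M - P_after X c) *m col (lshift m c) X in w r 0 / enorm w).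

Definition sigma_hat (n k m : nat) (X : 'M[R]_(n, k + m)) (y : 'cV[R]_n) : R :=
  enorm ((1%:M - P_rest X) *m y).

Definition g_fun (n k m : nat) (X : 'M[R]_(n, k + m)) (y : 'cV[R]_n) (lam : R)
  (beta : 'cV[R]_k -> 'cV[R]_m) (r : R) (b : 'cV[R]_k) : 'cV[R]_k :=
  (sigma_hat X y)^-1 *: (invmx ((lsubmx X)^T *m V1 X) *m
    (- ((lsubmx X)^T *m (P_rest X *m y - lsubmx X *m b - rsubmx X *m beta b))
     + (n%:R * lam / r) *: b)).

Definition grad_g (n k m : nat) (X : 'M[R]_(n, k + m)) (y : 'cV[R]_n) (lam : R)
  (beta : 'cV[R]_k -> 'cV[R]_m) (r : R) (bs : 'cV[R]_k) : 'M[R]_k :=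
  (sigma_hat X y)^-1 *: (invmx ((lsubmx X)^T *m V1 X) *m
    ((lsubmx X)^T *m (1%:M - colspan_proj (rsubmx X) (active beta bs)) *m lsubmx X
     + (n%:R * lam / r) *: 1%:M)).

Definition S_mx (n k m : nat) (X : 'M[R]_(n, k + m)) : 'M[R]_k :=
  (lsubmx X)^T *m V1 X *m (V1 X)^T *m lsubmx X.

Definition beta_check (n k m : nat) (X : 'M[R]_(n, k + m)) (y : 'cV[R]_n)
  (beta : 'cV[R]_k -> 'cV[R]_m) (bs : 'cV[R]_k) : 'cV[R]_k :=
  invmx (S_mx X) *m (lsubmx X)^T *m P_rest X *m
    (y - rsubmx X *m beta bs
       - colspan_proj (rsubmx X) (active beta bs) *m lsubmx X *m bs).

Definition nu_vec (n k m : nat) (X : 'M[R]_(n, k + m)) (y : 'cV[R]_n)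
  (beta : 'cV[R]_k -> 'cV[R]_m) (bs : 'cV[R]_k) : 'cV[R]_k :=
  - ((sigma_hat X y)^-1 *: ((V1 X)^T *m lsubmx X *m beta_check X y beta bs)).

End Defs.

(* Main.v *)
Require Import Defs.
From HB Require Import structures.
From mathcomp Require Import all_boot all_order all_algebra.
From mathcomp Require Import reals.
From mathcomp Require Import ring lra.
Set Implicit Arguments. Unset Strict Implicit. Unset Printing Implicit Defensive.
Import Order.TTheory GRing.Theory Num.Theory.
Local Open Scope ring_scope.

Section Aux.
Variable R : realType.
Notation pmx := Defs.proj_mx.

Definition colinj n p (C : 'M[R]_(n,p)) :=
  forall q (V : 'M[R]_(p,q)), C *m V = 0 -> V = 0.

Lemma sumsq_eq0 n (F : 'I_n -> R) : \sum_i F i ^+ 2 = 0 -> forall i, F i = 0.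
Proof.
move=> H i; have /psumr_eq0P := H; move=> /(_ (fun j _ => sqr_ge0 (F j))) /(_ i isT).
by move/eqP; rewrite sqrf_eq0 => /eqP.
Qed.

Lemma gram_eq0 n p (V : 'M[R]_(n,p)) : V^T *m V = 0 -> V = 0.
Proof.
move=> H; apply/matrixP => i j; rewrite mxE.
have h : (V^T *m V) j j = 0 by rewrite H mxE.
rewrite mxE in h.
have h2 : \sum_l (V l j) ^+ 2 = 0.
  by rewrite -[RHS]h; apply: eq_bigr => l _; rewrite mxE expr2.
exact: (sumsq_eq0 h2).
Qed.

Lemma enorm_eq0 p (v : 'cV[R]_p) : enorm v = 0 -> v = 0.
Proof.
rewrite /enorm => /eqP; rewrite sqrtr_eq0 => h.
have h0 : \sum_i v i 0 ^+ 2 = 0.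
  by apply/eqP; rewrite eq_le h sumr_ge0 // => i _; apply: sqr_ge0.
apply/matrixP => i j; rewrite ord1 mxE; exact: (sumsq_eq0 (F := fun l => v l 0)).
Qed.

Lemma enorm_ge0 p (v : 'cV[R]_p) : 0 <= enorm v.
Proof. exact: sqrtr_ge0. Qed.

Lemma enorm2 p (v : 'cV[R]_p) : enorm v ^+ 2 = (v^T *m v) 0 0.
Proof.
rewrite /enorm sqr_sqrtr ?sumr_ge0 // => [|i _]; last exact: sqr_ge0.
by rewrite mxE; apply: eq_bigr => i _; rewrite mxE expr2.
Qed.

Lemma abs_le_enorm p (v : 'cV[R]_p) i : `|v i 0| <= enorm v.
Proof.
rewrite /enorm -(sqrtr_sqr (v i 0)); rewrite ler_sqrt; last first.
  by rewrite sumr_ge0 // => j _; apply: sqr_ge0.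
by rewrite (bigD1 i) //= lerDl sumr_ge0 // => j _; apply: sqr_ge0.
Qed.

Lemma colinj_unit n p (C : 'M[R]_(n,p)) : colinj C -> (C^T *m C) \in unitmx.
Proof.
move=> cC; rewrite -row_free_unit -kermx_eq0; apply/eqP.
set K := kermx _.
have hK : K *m (C^T *m C) = 0 by apply: mulmx_ker.
have h1 : C *m K^T = 0.
  apply: gram_eq0; rewrite trmx_mul trmxK !mulmxA.
  by rewrite -(mulmxA K) hK mul0mx.
by rewrite -[K]trmxK (cC _ _ h1) trmx0.
Qed.


Lemma proj_C n p (C : 'M[R]_(n,p)) : colinj C -> pmx C *m C = C.
Proof.
move=> cC; rewrite /Defs.proj_mx -!mulmxA mulVmx ?mulmx1 //; exact: colinj_unit.
Qed.

Lemma projT_C n p (C : 'M[R]_(n,p)) : colinj C -> C^T *m pmx C = C^T.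
Proof.
move=> cC; rewrite /Defs.proj_mx !mulmxA mulmxV ?mul1mx //; exact: colinj_unit.
Qed.

Lemma proj_tr n p (C : 'M[R]_(n,p)) : (pmx C)^T = pmx C.
Proof.
rewrite /Defs.proj_mx trmx_mul trmxK trmx_mul trmx_inv trmx_mul trmxK.
by rewrite mulmxA.
Qed.

Lemma proj_idem n p (C : 'M[R]_(n,p)) : colinj C -> pmx C *m pmx C = pmx C.
Proof.
move=> cC; rewrite {1}/Defs.proj_mx -!mulmxA projT_C // /Defs.proj_mx !mulmxA. done.
Qed.

Lemma colinj_rank n p (X : 'M[R]_(n,p)) : \rank X = p -> colinj X.
Proof.
move=> rX q V XV.
have rf : row_free X^T by rewrite /row_free mxrank_tr rX.
have : V^T *m X^T = 0 *m X^T by rewrite -trmx_mul XV trmx0 mul0mx.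
by move/(row_free_inj rf)/(congr1 trmx); rewrite trmxK trmx0.
Qed.

Definition Emb p p' (f : 'I_p' -> 'I_p) : 'M[R]_(p, p') :=
  \matrix_(i, j) (i == f j)%:R.

Lemma colsubE n p p' (f : 'I_p' -> 'I_p) (X : 'M[R]_(n,p)) :
  colsub f X = X *m Emb f.
Proof.
apply/matrixP => r j; rewrite !mxE (bigD1 (f j)) //= mxE eqxx mulr1.
rewrite big1 ?addr0 // => i /negbTE ne; by rewrite mxE ne mulr0.
Qed.

Lemma Emb_entry p p' (f : 'I_p' -> 'I_p) q (V : 'M[R]_(p', q)) j l :
  injective f -> (Emb f *m V) (f j) l = V j l.
Proof.
move=> fi; rewrite mxE (bigD1 j) //= mxE eqxx mul1r big1 ?addr0 // => i ne.
by rewrite mxE (inj_eq fi) eq_sym (negbTE ne) mul0r.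
Qed.

Lemma Emb_out p p' (f : 'I_p' -> 'I_p) q (V : 'M[R]_(p', q)) i l :
  (forall j, f j != i) -> (Emb f *m V) i l = 0.
Proof.
move=> h; rewrite mxE big1 // => j _; by rewrite mxE eq_sym (negbTE (h j)) mul0r.
Qed.

Lemma colinj_colsub n p p' (f : 'I_p' -> 'I_p) (X : 'M[R]_(n,p)) :
  colinj X -> injective f -> colinj (colsub f X).
Proof.
move=> cX fi q V; rewrite colsubE -mulmxA => /cX h.
apply/matrixP => j l; by rewrite -(Emb_entry V j l fi) h !mxE.
Qed.


Lemma sq_expand p (r u : 'cV[R]_p) :
  enorm (r - u) ^+ 2 = enorm r ^+ 2 - 2 * (u^T *m r) 0 0 + enorm u ^+ 2.
Proof.
rewrite !enorm2.
have -> : (r - u)^T = r^T - u^T by apply/matrixP => i j; rewrite !mxE.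
have e : r^T *m u = u^T *m r.
  apply/matrixP=> i j; rewrite !ord1 !mxE; apply: eq_bigr => l _; by rewrite !mxE mulrC.
rewrite mulmxBl !mulmxBr e !mxE; lra.
Qed.

Lemma obj_shift n k m (X : 'M[R]_(n, k + m)) y lam b g d :
  lasso_obj X y lam b (g + d) =
  (2 * n%:R)^-1 * (enorm (y - lsubmx X *m b - rsubmx X *m g) ^+ 2
     - 2 * (d^T *m ((rsubmx X)^T *m (y - lsubmx X *m b - rsubmx X *m g))) 0 0
     + enorm (rsubmx X *m d) ^+ 2) + lam * l1norm (g + d).
Proof.
rewrite /lasso_obj mulmxA -trmx_mul -sq_expand; congr (_ * _ ^+ 2 + _).
by rewrite mulmxDr opprD addrA.
Qed.

Lemma norm_shift (x t : R) : x != 0 -> `|t| < `|x| -> `|x + t| = `|x| + Num.sg x * t.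
Proof.
rewrite neq_lt => /orP[hx|hx]; last first.
  rewrite gtr0_sg // mul1r (gtr0_norm hx) => /ltr_normlP [h1 h2].
  by rewrite gtr0_norm //; lra.
rewrite ltr0_sg // mulN1r (ltr0_norm hx) => /ltr_normlP [h1 h2].
by rewrite ltr0_norm //; lra.
Qed.

Lemma quad_zero (a q eps : R) : 0 < eps -> 0 <= q ->
  (forall t, `|t| < eps -> 0 <= a * t + q * t ^+ 2) -> a = 0.
Proof.
move=> e0 q0 H; apply/eqP; apply/negPn/negP => a0.
have aa : 0 < `|a| by rewrite normr_gt0.
set D := 2 * (eps * q + `|a| + eps).
have D0 : 0 < D by rewrite /D; nra.
set tau := eps * `|a| / D.
have tD : tau * D = eps * `|a| by rewrite /tau mulfVK // gt_eqF.
have t0 : 0 < tau by rewrite /tau divr_gt0 // mulr_gt0.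
have te : tau < eps.
  have : tau * D < eps * D by rewrite tD /D; nra.
  by rewrite ltr_pM2r.
have h1 := H tau; have h2 := H (- tau).
rewrite gtr0_norm // in h1; rewrite normrN gtr0_norm // in h2.
have {h1 h2} : `|a| * tau <= q * tau ^+ 2.
  move: (h1 te) (h2 te); move: a0; rewrite neq_lt => /orP[ha|ha];
  rewrite ?(gtr0_norm ha) ?(ltr0_norm ha) => ??; nra.
rewrite expr2 => h.
have : `|a| <= q * tau by rewrite -(ler_pM2r t0) -mulrA.
have : q * tau * D < `|a| * D.
  rewrite -mulrA tD /D. have p1 : 0 < `|a| * eps by rewrite mulr_gt0.
  have p2 : 0 <= `|a| * eps * q by rewrite mulr_ge0 // ltW.
  have p3 : 0 < `|a| * `|a| by rewrite mulr_gt0. nra.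
rewrite ltr_pM2r // => ??; lra.
Qed.


Lemma l1norm_upd m (g : 'cV[R]_m) (t : R) j :
  l1norm (g + t *: delta_mx j 0) = l1norm g - `|g j 0| + `|g j 0 + t|.
Proof.
rewrite /l1norm (bigD1 j) //= [in RHS](bigD1 j) //= !mxE eqxx mulr1.
have -> : \sum_(i < m | i != j) `|(g + t *: delta_mx j 0) i 0| =
          \sum_(i < m | i != j) `|g i 0|.
  apply: eq_bigr => i /negbTE ne; by rewrite !mxE ne mulr0 addr0.
lra.
Qed.

Lemma dotdelta m (W : 'cV[R]_m) (t : R) j :
  ((t *: (delta_mx j 0 : 'cV[R]_m))^T *m W) 0 0 = t * W j 0.
Proof.
have -> : (t *: delta_mx j (0 : 'I_1))^T = t *: delta_mx (0 : 'I_1) j.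
  by apply/matrixP => a c; rewrite !mxE andbC.
by rewrite -scalemxAl -rowE !mxE.
Qed.

Lemma enormZ2 p (v : 'cV[R]_p) (t : R) : enorm (t *: v) ^+ 2 = t ^+ 2 * enorm v ^+ 2.
Proof.
rewrite !enorm2 !mxE mulr_sumr; apply: eq_bigr => i _; rewrite !mxE; ring.
Qed.

Lemma kkt n k m (X : 'M[R]_(n, k + m)) y lam b (g0 : 'cV[R]_m) :
  (0 < n)%N ->
  (forall g, lasso_obj X y lam b g0 <= lasso_obj X y lam b g) ->
  forall j, g0 j 0 != 0 ->
  ((rsubmx X)^T *m (y - lsubmx X *m b - rsubmx X *m g0)) j 0
    = n%:R * lam * Num.sg (g0 j 0).
Proof.
move=> n0 Hmin j gj0.
set r0 := y - _ - _; set W := (rsubmx X)^T *m r0.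
set U := enorm (rsubmx X *m delta_mx j 0) ^+ 2.
have nR : (n%:R : R) != 0 by rewrite pnatr_eq0 -lt0n.
have nR0 : (0 : R) < n%:R by rewrite ltr0n.
set a := - (n%:R^-1 * W j 0) + lam * Num.sg (g0 j 0).
have U0 : 0 <= U by rewrite /U sqr_ge0.
have q0 : 0 <= (2 * n%:R)^-1 * U by rewrite mulr_ge0 // invr_ge0 mulr_ge0.
have ha : a = 0.
  apply: (@quad_zero a ((2 * n%:R)^-1 * U) `|g0 j 0|) => //; first by rewrite normr_gt0.
  move=> t ht; have := Hmin (g0 + t *: delta_mx j 0).
  rewrite obj_shift -/r0 -/W dotdelta -scalemxAr enormZ2 -/U l1norm_upd.
  rewrite norm_shift // /lasso_obj -/r0 /a.
  set E := enorm r0 ^+ 2; set L := l1norm g0; set s := Num.sg (g0 j 0).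
  have -> : (2 * n%:R)^-1 = (2%:R^-1 * n%:R^-1 : R) by rewrite invfM.
  move=> h.
  have e : (2%:R^-1 : R) * 2 = 1 by rewrite mulVf // pnatr_eq0.
  set c := (n%:R^-1 : R) in h *.
  set i2 := (2%:R^-1 : R) in h e *.
  nra.
move: ha; rewrite /a => /eqP; rewrite addrC subr_eq0 => /eqP h.
by rewrite -mulrA h mulrA mulfV // mul1r.
Qed.


Lemma conv_ineq n k m (X : 'M[R]_(n, k + m)) y lam b (gam h : 'cV[R]_m) (s : 'I_m -> R) :
  (0 < n)%N -> 0 <= lam ->
  (forall j, ((rsubmx X)^T *m (y - lsubmx X *m b - rsubmx X *m gam)) j 0 * (h - gam) j 0
      = n%:R * lam * s j * (h - gam) j 0) ->
  (forall j, s j * (h - gam) j 0 <= `|h j 0| - `|gam j 0|) ->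
  (2 * n%:R)^-1 * enorm (rsubmx X *m (h - gam)) ^+ 2
    <= lasso_obj X y lam b h - lasso_obj X y lam b gam.
Proof.
move=> n0 l0 HW Hs.
have eh : gam + (h - gam) = h by rewrite addrCA subrr addr0.
have -> : lasso_obj X y lam b h = lasso_obj X y lam b (gam + (h - gam)) by rewrite eh.
rewrite obj_shift eh.
set r0 := y - _ - _; set W := (rsubmx X)^T *m r0; set d := h - gam.
have nR : (n%:R : R) != 0 by rewrite pnatr_eq0 -lt0n.
have nR0 : (0 : R) < n%:R by rewrite ltr0n.
have hdot : (d^T *m W) 0 0 = n%:R * lam * \sum_j s j * d j 0.
  rewrite mxE mulr_sumr; apply: eq_bigr => j _; rewrite mxE mulrC HW; ring.
have hl1 : \sum_j s j * d j 0 <= l1norm h - l1norm gam.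
  rewrite /l1norm -sumrB; apply: ler_sum => j _; exact: Hs.
rewrite hdot /lasso_obj -/r0.
set S := \sum_j _ in hl1 *.
set E := enorm r0 ^+ 2; set F := enorm (rsubmx X *m d) ^+ 2.
have e : (2 * n%:R)^-1 * (2 * (n%:R * lam * S)) = lam * S.
  by field; rewrite nR.
rewrite mulrDr mulrBr e.
have : lam * S <= lam * (l1norm h - l1norm gam) by rewrite ler_wpM2l.
lra.
Qed.


Lemma fin_eps (T : finType) (U : Type) (f : U -> R) (Q : T -> U -> Prop) :
  (forall j, exists2 e, 0 < e & forall u, f u < e -> Q j u) ->
  exists2 e, 0 < e & forall u, f u < e -> forall j, Q j u.
Proof.
move=> H.
suff : forall s : seq T, exists2 e, 0 < e & forall u, f u < e -> forall j, j \in s -> Q j u.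
  case/(_ (enum T)) => e e0 He; exists e => // u fu j; apply: He => //; by rewrite mem_enum.
elim => [|a s [e e0 He]]; first by exists 1 => // u _ j.
have [e' e'0 He'] := H a.
exists (Num.min e e'); first by rewrite lt_min e0 e'0.
move=> u; rewrite lt_min => /andP[h1 h2] j; rewrite inE => /orP[/eqP->|js].
  exact: He'.
exact: He.
Qed.


Lemma entryB p q (A B : 'M[R]_(p,q)) i c : (A - B) i c = A i c - B i c.
Proof. by rewrite !mxE. Qed.

Lemma mv_bound p q (L : 'M[R]_(p, q)) (v : 'cV[R]_q) j :
  `|(L *m v) j 0| <= (\sum_l `|L j l|) * enorm v.
Proof.
rewrite mxE mulr_suml; apply: le_trans (ler_norm_sum _ _ _) _.
apply: ler_sum => l _; rewrite normrM; apply: ler_wpM2l => //; exact: abs_le_enorm.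
Qed.

Lemma EmbT_entry p p' (f : 'I_p' -> 'I_p) q (W : 'M[R]_(p, q)) i c :
  ((Emb f)^T *m W) i c = W (f i) c.
Proof.
rewrite mxE (bigD1 (f i)) //= !mxE eqxx mul1r big1 ?addr0 // => l ne.
by rewrite !mxE (negbTE ne) mul0r.
Qed.

Lemma sg_le_norm (x h : R) : Num.sg x * h <= `|h|.
Proof.
apply: le_trans (ler_norm _) _; rewrite normrM normr_sg.
by case: (x != 0); rewrite ?mul1r ?mul0r.
Qed.


Lemma lasso_affine n k m (X : 'M[R]_(n, k + m)) y lam (beta : 'cV[R]_k -> 'cV[R]_m) bs :
  (0 < n)%N -> \rank X = (k + m)%N -> 0 <= lam -> is_lasso_map X y lam beta ->
  (exists2 e : R, 0 < e &
     forall b : 'cV[R]_k, enorm (b - bs) < e -> active beta b = active beta bs) ->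
  exists2 e : R, 0 < e & forall b : 'cV[R]_k, enorm (b - bs) < e ->
   rsubmx X *m beta b + colspan_proj (rsubmx X) (active beta bs) *m lsubmx X *m b
   = rsubmx X *m beta bs + colspan_proj (rsubmx X) (active beta bs) *m lsubmx X *m bs.
Proof.
move=> n0 rX l0 Hl [e0 e00 He0].
set A := active beta bs; set X1 := lsubmx X; set X2 := rsubmx X.
set f := @enum_val _ (mem A).
have fi : injective f by apply: enum_val_inj.
have cX : colinj X by apply: colinj_rank.
have cX2 : colinj X2 by rewrite /X2 rsubmxEsub; apply: colinj_colsub => //; apply: rshift_inj.
set C := cols X2 A.
have cC : colinj C by apply: colinj_colsub.
have CE : C = X2 *m Emb f by rewrite /C /cols colsubE.
have PAE : colspan_proj X2 A = pmx C by [].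
set PA := colspan_proj X2 A.
have CP : C^T *m PA = C^T by rewrite /PA PAE projT_C.
have CTE : forall (w : 'cV[R]_n) i, (C^T *m w) i 0 = ((X2)^T *m w) (f i) 0.
  by move=> w i; rewrite CE trmx_mul -mulmxA EmbT_entry.
set L := Emb f *m invmx (C^T *m C) *m C^T *m X1.
set bst := beta bs.
have XD : forall v, X2 *m (L *m v) = PA *m X1 *m v.
  by move=> q v; rewrite /L /PA PAE /Defs.proj_mx -!mulmxA (mulmxA X2) -CE.
have Dout : forall (v : 'cV[R]_k) j, j \notin A -> (L *m v) j 0 = 0.
  move=> v j jA; rewrite /L -!mulmxA; apply: Emb_out => i.
  by apply: contraNneq jA => <-; apply: enum_valP.
have bout : forall b j, active beta b = A -> j \notin A -> beta b j 0 = 0.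
  by move=> b j <-; rewrite inE negbK => /eqP.
have [e1 e10 He1] : exists2 e, 0 < e & forall b : 'cV[R]_k, enorm (b - bs) < e ->
    forall j, bst j 0 != 0 -> `|(L *m (b - bs)) j 0| < `|bst j 0|.
  apply: (fin_eps (f := fun b : 'cV[R]_k => enorm (b - bs))
     (Q := fun j b => bst j 0 != 0 -> `|(L *m (b - bs)) j 0| < `|bst j 0|)).
  move=> j; set K := \sum_l `|L j l|.
  have K0 : 0 <= K by rewrite sumr_ge0.
  case: (boolP (bst j 0 != 0)) => [bj|]; last by exists 1 => // b _ /negP.
  have bj0 : 0 < `|bst j 0| by rewrite normr_gt0.
  exists (`|bst j 0| / (K + 1)); first by rewrite divr_gt0 // ltr_pwDr.
  move=> b hb _; apply: le_lt_trans (mv_bound _ _ _) _.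
  have K1 : 0 < K + 1 by rewrite ltr_pwDr.
  rewrite ltr_pdivlMr // in hb.
  rewrite -/K; have := enorm_ge0 (b - bs); nra.
exists (Num.min e0 e1); first by rewrite lt_min e00 e10.
move=> b; rewrite lt_min => /andP[hb0 hb1].
have Ab := He0 _ hb0.
set del := b - bs; set D := L *m del; set gam := bst - D.
have kkt0 := kkt n0 (Hl bs).
have rg : y - X1 *m b - X2 *m gam
    = (y - X1 *m bs - X2 *m bst) - (X1 *m del - PA *m X1 *m del).
  rewrite /gam mulmxBr /D XD /del mulmxBr -!mulmxA; set u := X1 *m b; set w := X1 *m bs.
  set z := X2 *m bst; set pu := PA *m u; set pw := PA *m w.
  rewrite !mulmxBr -/pu -/pw; apply/matrixP => a c; rewrite !mxE; lra.
have orth : forall j, j \in A -> ((X2)^T *m (X1 *m del - PA *m X1 *m del)) j 0 = 0.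
  move=> j jA.
  have -> : j = f (enum_rank_in jA j) by rewrite /f enum_rankK_in.
  by rewrite -CTE mulmxBr -[PA *m X1 *m del]mulmxA (mulmxA C^T PA) CP subrr mxE.
have Wg : forall j, j \in A ->
    ((X2)^T *m (y - X1 *m b - X2 *m gam)) j 0 = n%:R * lam * Num.sg (bst j 0).
  move=> j jA; rewrite rg mulmxBr entryB.
  rewrite orth // subr0; apply: kkt0; by rewrite inE in jA.
have bsout : forall j, j \notin A -> bst j 0 = 0 by move=> j; apply: bout.
have gout : forall j, j \notin A -> (beta b - gam) j 0 = 0.
  move=> j jA; rewrite entryB /gam entryB bout // bsout // Dout //; by rewrite !subr0.
have HW : forall j,
    ((rsubmx X)^T *m (y - lsubmx X *m b - rsubmx X *m gam)) j 0 * (beta b - gam) j 0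
    = n%:R * lam * Num.sg (bst j 0) * (beta b - gam) j 0.
  move=> j; case: (boolP (j \in A)) => jA; first by rewrite Wg.
  by rewrite gout // !mulr0.
have Hs : forall j, Num.sg (bst j 0) * (beta b - gam) j 0 <= `|beta b j 0| - `|gam j 0|.
  move=> j; case: (boolP (j \in A)) => jA; last first.
    by rewrite gout // mulr0 /gam entryB bout // bsout // Dout // !subr0 normr0 subrr.
  have bj : bst j 0 != 0 by rewrite inE in jA.
  have hD := He1 b hb1 j bj.
  have hg : `|gam j 0| = Num.sg (bst j 0) * gam j 0.
    rewrite /gam entryB norm_shift // ?normrN // {1}normrEsg; ring.
  rewrite hg entryB mulrBr; have := sg_le_norm (bst j 0) (beta b j 0); lra.
have Hc := conv_ineq n0 l0 HW Hs.
have Hm := Hl b gam.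
have n2 : 0 < (2 * n%:R : R)^-1 by rewrite invr_gt0 mulr_gt0 // ltr0n.
have h0 : enorm (rsubmx X *m (beta b - gam)) = 0.
  have : enorm (rsubmx X *m (beta b - gam)) ^+ 2 <= 0.
    rewrite -(pmulr_rle0 _ n2); lra.
  move=> h; apply/eqP; rewrite -sqrf_eq0 eq_le h sqr_ge0 //.
have e : X2 *m beta b = X2 *m bst - PA *m X1 *m del.
  have := enorm_eq0 h0; rewrite mulmxBr => /eqP; rewrite subr_eq0 => /eqP ->.
  by rewrite /gam mulmxBr /D XD.
by rewrite e /del mulmxBr opprB addrA subrK.
Qed.



Lemma colT_entry n p (X : 'M[R]_(n,p)) q (v : 'cV[R]_n) :
  ((col q X)^T *m v) 0 0 = (X^T *m v) q 0.
Proof. by rewrite !mxE; apply: eq_bigr => r _; rewrite !mxE. Qed.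

Lemma trmx1B n (P : 'M[R]_n) : (1%:M - P)^T = 1%:M - P^T.
Proof. by apply/matrixP => i j; rewrite !mxE eq_sym. Qed.

Lemma proj_orth n p (X : 'M[R]_(n,p)) (S : {set 'I_p}) q (u : 'cV[R]_n) :
  colinj X -> q \in S -> ((col q X)^T *m ((1%:M - colspan_proj X S) *m u)) 0 0 = 0.
Proof.
move=> cX qS.
set f := @enum_val _ (mem S).
set C := cols X S.
have cC : colinj C by apply: colinj_colsub => //; apply: enum_val_inj.
have CE : C = X *m Emb f by rewrite /C /cols colsubE.
have CTE : forall (w : 'cV[R]_n) i, (C^T *m w) i 0 = (X^T *m w) (f i) 0.
  by move=> w i; rewrite CE trmx_mul -mulmxA EmbT_entry.
have CP : C^T *m colspan_proj X S = C^T by rewrite projT_C.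
rewrite colT_entry.
have -> : q = f (enum_rank_in qS q) by rewrite /f enum_rankK_in.
by rewrite -CTE mulmxA mulmxBr mulmx1 CP subrr mul0mx mxE.
Qed.

Lemma proj_diag n p (X : 'M[R]_(n,p)) (S : {set 'I_p}) q :
  colinj X -> q \notin S ->
  let w := (1%:M - colspan_proj X S) *m col q X in
  enorm w != 0 /\ ((col q X)^T *m w) 0 0 = enorm w ^+ 2.
Proof.
move=> cX qS w.
set f := @enum_val _ (mem S).
set C := cols X S.
have cC : colinj C by apply: colinj_colsub => //; apply: enum_val_inj.
have CE : C = X *m Emb f by rewrite /C /cols colsubE.
set P := colspan_proj X S.
have PE : P = pmx C by [].
have idem1 : (1%:M - P) *m (1%:M - P) = 1%:M - P.
  have PP : P *m P = P := proj_idem cC.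
  by rewrite mulmxBr mulmx1 mulmxBl mul1mx PP subrr subr0.
have hsq : ((col q X)^T *m w) 0 0 = enorm w ^+ 2.
  rewrite enorm2 /w trmx_mul trmx1B proj_tr -/P.
  by rewrite !mulmxA -[in RHS](mulmxA _ (1%:M - P) (1%:M - P)) idem1.
split=> //; apply/eqP => /enorm_eq0 w0.
have : col q X = X *m (Emb f *m (invmx (C^T *m C) *m C^T *m col q X)).
  move: w0; rewrite /w mulmxBl mul1mx => /eqP; rewrite subr_eq0 => /eqP {1}->.
  by rewrite /colspan_proj /Defs.proj_mx -/C !mulmxA -CE.
set u := invmx (C^T *m C) *m C^T *m col q X => hc.
have : X *m (delta_mx q 0 - Emb f *m u) = 0 by rewrite mulmxBr -colE -hc subrr.
move=> /(cX _ _) /matrixP /(_ q 0).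
rewrite entryB Emb_out; last first.
  move=> l; apply: contraNneq qS => <-; exact: enum_valP.
by rewrite !mxE !eqxx subr0 => /eqP; rewrite oner_eq0.
Qed.


Lemma M_unit n k m (X : 'M[R]_(n, k + m)) :
  \rank X = (k + m)%N -> (lsubmx X)^T *m V1 X \in unitmx.
Proof.
move=> rX; have cX : colinj X by apply: colinj_rank.
pose w (c : 'I_k) := (1%:M - P_after X c) *m col (lshift m c) X.
have Ment : forall i j : 'I_k, ((lsubmx X)^T *m V1 X) i j
    = ((col (lshift m i) X)^T *m w j) 0 0 / enorm (w j).
  move=> i j; rewrite mxE [((col _ X)^T *m w j) 0 0]mxE mulr_suml; apply: eq_bigr => r _.
  by rewrite !mxE /= mulrA /w !mxE.
have Mdiag : forall c : 'I_k, ((lsubmx X)^T *m V1 X) c c = enorm (w c) /\ enorm (w c) != 0.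
  move=> c; have qS : lshift m c \notin [set j : 'I_(k + m) | (c < j)%N].
    by rewrite inE /= ltnn.
  have [h1 h2] := proj_diag cX qS.
  rewrite Ment; split => //; rewrite /w /P_after h2 expr2 mulfK //.
have Moff : forall i j : 'I_k, (j < i)%N -> ((lsubmx X)^T *m V1 X) i j = 0.
  move=> i j ji; have qS : lshift m i \in [set l : 'I_(k + m) | (j < l)%N].
    by rewrite inE /=.
  by rewrite Ment /w /P_after (proj_orth _ cX qS) mul0r.
rewrite -unitmx_tr unitmxE det_trig; last first.
  apply/is_trig_mxP => i j ij; rewrite mxE; exact: Moff.
rewrite unitfE; apply/prodf_neq0 => i _; rewrite mxE.
by have [-> ?] := Mdiag i.
Qed.

Lemma zmod_id n (u1 u2 u3 u4 u5 u6 : 'cV[R]_n) :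
  u3 + u4 = u5 + u6 -> - (u1 - u2 - u3) = (u2 - u4) - (u1 - u5 - u6).
Proof.
move=> /matrixP h; apply/matrixP => a c; have := h a c; rewrite !mxE; lra.
Qed.

End Aux.

Unset Implicit Arguments.

(* d = k + m; 1 <= k < d  <->  0 < k /\ 0 < m. *)
Theorem corollary2p2 (R : realType) (n k m : nat)
  (X : 'M[R]_(n, k + m)) (y : 'cV[R]_n) (lam : R)
  (beta : 'cV[R]_k -> 'cV[R]_m) (bs : 'cV[R]_k) :
  (k + m <= n)%N ->
  \rank X = (k + m)%N ->
  (0 < k)%N -> (0 < m)%N ->
  0 < sigma_hat X y ->
  0 < lam ->
  is_lasso_map X y lam beta ->
  bs != 0 ->
  (exists2 e : R, 0 < e &
     forall b : 'cV[R]_k, enorm (b - bs) < e -> active beta b = active beta bs) ->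
  exists2 e : R, 0 < e &
    forall b : 'cV[R]_k, enorm (b - bs) < e -> enorm b = enorm bs ->
      g_fun X y lam beta (enorm bs) b
      = grad_g X y lam beta (enorm bs) bs *m b + nu_vec X y beta bs.
Proof.
move=> hn rX k0 m0 sig0 lam0 Hl bs0 Hact.
have n0 : (0 < n)%N by apply: leq_trans hn; rewrite addn_gt0 k0.
have [e e0 He] := lasso_affine n0 rX (ltW lam0) Hl Hact.
exists e => // b hb _.
have key := He b hb.
set X1 := lsubmx X in key *; set X2 := rsubmx X in key *.
set A := active beta bs in key *.
set PA := colspan_proj X2 A in key *.
have cX : colinj X by apply: colinj_rank.
have cX2 : colinj X2 by rewrite /X2 rsubmxEsub; apply: colinj_colsub => //; apply: rshift_inj.
set f := @enum_val _ (mem A).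
set C := cols X2 A.
have CE : C = X2 *m @Emb R _ _ f by rewrite /C /cols colsubE.
have P2X2 : P_rest X *m X2 = X2 by apply: proj_C.
have P2PA : P_rest X *m PA = PA.
  rewrite /PA /colspan_proj /Defs.proj_mx -/C !mulmxA.
  by rewrite -[P_rest X *m C]/(P_rest X *m C) CE mulmxA P2X2 -CE.
set M := X1^T *m V1 X.
have uM : M \in unitmx by apply: M_unit.
have uMt : M^T \in unitmx by rewrite unitmx_tr.
have SE : S_mx X = M *m M^T by rewrite /S_mx /M trmx_mul trmxK !mulmxA.
have uS : S_mx X \in unitmx by rewrite SE unitmx_mul uM uMt.
have MS : M^T *m invmx (S_mx X) = invmx M.
  by rewrite -[RHS]mulmx1 -(mulmxV uS) SE mulmxA (mulmxA (invmx M) M) mulVmx // mul1mx.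
have VX : (V1 X)^T *m X1 = M^T by rewrite /M trmx_mul trmxK.
set si := (sigma_hat X y)^-1.
set c := n%:R * lam / enorm bs.
rewrite /g_fun /grad_g /nu_vec /beta_check -/X1 -/X2 -/A -/PA VX -/M -/si -/c.
move: (S_mx X) MS => S MS.
set P2 := P_rest X in P2X2 P2PA *.
set bb := beta b in key *; set bst := beta bs in key *.
clearbody M P2 PA bb bst.
rewrite -scalemxAl -scalerN -scalerDr; congr (_ *: _).
rewrite !mulmxA MS -!mulmxA -mulmxBr; congr (invmx M *m _).
rewrite mulmxDl -scalemxAl mul1mx -!mulmxA.
have vec : - (P2 *m y - X1 *m b - X2 *m bb)
    = (1%:M - PA) *m (X1 *m b) - P2 *m (y - X2 *m bst - PA *m (X1 *m bs)).
  rewrite mulmxBl mul1mx !mulmxBr !mulmxA P2X2 P2PA.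
  exact: zmod_id.
rewrite -mulmxN vec mulmxBr.
set u1 := X1^T *m _; set u2 := X1^T *m _.
by rewrite addrAC.
Qed.
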